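(* For every three-qubit state $\rho_{ABC}$, $$I_{local}+I_{nonlocal}\le 3,$$ where $I_{local}=|\vec a|^2+|\vec b|^2+|\vec c|^2$ and $I_{nonlocal}=\max\{N_{AB}+N_{AC},\,N_{AB}+N_{BC},\,N_{AC}+N_{BC}\}$ with $N_{ij}=\max\{0,S_{ij}-1\}$.
   Context: $\vec a,\vec b,\vec c\in\mathbb R^3$ are the Bloch vectors of the single-qubit marginals of $\rho_{ABC}$: $a_k=\mathrm{Tr}[\rho_A\sigma_k]$, $b_k=\mathrm{Tr}[\rho_B\sigma_k]$, $c_k=\mathrm{Tr}[\rho_C\sigma_k]$ ($\sigma_k$ Pauli matrices). For a two-qubit state $\rho$ let $t_{kl}=\mathrm{Tr}[\rho\,\sigma_k\otimes\sigma_l]$ and $S(\rho)=\sum_{k,l=1}^3t_{kl}^2$; $S_{ij}=S(\rho_{ij})$ for the two-qubit reduced states $\rho_{ij}$ of $\rho_{ABC}$. *)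

(* Defs.v *)
From HB Require Import structures.
From mathcomp Require Import all_boot all_order all_algebra.
From mathcomp Require Import complex mxtens.
Set Implicit Arguments. Unset Strict Implicit. Unset Printing Implicit Defensive.
Import Order.TTheory GRing.Theory Num.Theory.
Local Open Scope ring_scope.

Section Qubits.
Variable R : rcfType.
Local Notation C := (R[i]).

(* composite indices: (a,b) |-> 2a+b  (standard Kronecker ordering) *)
Definition idx2 (a b : 'I_2) : 'I_(2 * 2) := mxtens_index (a, b).
Definition idx3 (a b c : 'I_2) : 'I_(2 * 2 * 2) := mxtens_index (idx2 a b, c).
Definition fst2 (i : 'I_(2 * 2)) : 'I_2 := (mxtens_unindex i).1.
Definition snd2 (i : 'I_(2 * 2)) : 'I_2 := (mxtens_unindex i).2.

Definition adj_mx m n (A : 'M[C]_(m, n)) : 'M[C]_(n, m) := (map_mx (@conjc R) A)^T.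

Definition is_density n (rho : 'M[C]_n) : Prop :=
  [/\ adj_mx rho = rho,
      forall v : 'cV[C]_n, 0 <= (adj_mx v *m rho *m v) 0 0
    & \tr rho = 1].

Definition pauli (k : 'I_3) : 'M[C]_2 :=
  \matrix_(i < 2, j < 2)
    if k == 0 :> nat then (if i == j then 0 else 1)
    else if k == 1 :> nat then
      (if i == j then 0 else if i == 0 :> nat then Complex 0 (-1) else Complex 0 1)
    else (if i == j then (if i == 0 :> nat then 1 else -1) else 0).

Definition kron2 (A B : 'M[C]_2) : 'M[C]_(2 * 2) :=
  \matrix_(i, j) (A (fst2 i) (fst2 j) * B (snd2 i) (snd2 j)).

Definition rhoA (rho : 'M[C]_(2 * 2 * 2)) : 'M[C]_2 :=
  \matrix_(a, a') \sum_(b < 2) \sum_(c < 2) rho (idx3 a b c) (idx3 a' b c).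
Definition rhoB (rho : 'M[C]_(2 * 2 * 2)) : 'M[C]_2 :=
  \matrix_(b, b') \sum_(a < 2) \sum_(c < 2) rho (idx3 a b c) (idx3 a b' c).
Definition rhoC (rho : 'M[C]_(2 * 2 * 2)) : 'M[C]_2 :=
  \matrix_(c, c') \sum_(a < 2) \sum_(b < 2) rho (idx3 a b c) (idx3 a b c').

Definition rhoAB (rho : 'M[C]_(2 * 2 * 2)) : 'M[C]_(2 * 2) :=
  \matrix_(i, j) \sum_(c < 2)
     rho (idx3 (fst2 i) (snd2 i) c) (idx3 (fst2 j) (snd2 j) c).
Definition rhoAC (rho : 'M[C]_(2 * 2 * 2)) : 'M[C]_(2 * 2) :=
  \matrix_(i, j) \sum_(b < 2)
     rho (idx3 (fst2 i) b (snd2 i)) (idx3 (fst2 j) b (snd2 j)).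
Definition rhoBC (rho : 'M[C]_(2 * 2 * 2)) : 'M[C]_(2 * 2) :=
  \matrix_(i, j) \sum_(a < 2)
     rho (idx3 a (fst2 i) (snd2 i)) (idx3 a (fst2 j) (snd2 j)).

(* Bloch vector components  a_k = Tr[rho sigma_k]  (real for Hermitian rho) *)
Definition bloch (s : 'M[C]_2) (k : 'I_3) : R := complex.Re (\tr (s *m pauli k)).
Definition bloch_norm2 (s : 'M[C]_2) : R := \sum_(k < 3) bloch s k ^+ 2.

Definition tcorr (s : 'M[C]_(2 * 2)) (k l : 'I_3) : R :=
  complex.Re (\tr (s *m kron2 (pauli k) (pauli l))).
Definition Scorr (s : 'M[C]_(2 * 2)) : R :=
  \sum_(k < 3) \sum_(l < 3) tcorr s k l ^+ 2.

Definition Nij (s : 'M[C]_(2 * 2)) : R := Num.max 0 (Scorr s - 1).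

Definition I_local (rho : 'M[C]_(2 * 2 * 2)) : R :=
  bloch_norm2 (rhoA rho) + bloch_norm2 (rhoB rho) + bloch_norm2 (rhoC rho).

Definition I_nonlocal (rho : 'M[C]_(2 * 2 * 2)) : R :=
  let NAB := Nij (rhoAB rho) in
  let NAC := Nij (rhoAC rho) in
  let NBC := Nij (rhoBC rho) in
  Num.max (NAB + NAC) (Num.max (NAB + NBC) (NAC + NBC)).

End Qubits.

(* Main.v *)
Require Import Defs.
From HB Require Import structures.
From mathcomp Require Import all_boot all_order all_algebra.
From mathcomp Require Import complex mxtens.
From mathcomp Require Import ring lra.
Set Warnings "-all".
Set Implicit Arguments. Unset Strict Implicit. Unset Printing Implicit Defensive.
Import Order.TTheory GRing.Theory Num.Theory.
Local Open Scope ring_scope.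
Local Open Scope complex_scope.

Section P.
Variable R : rcfType.
Local Notation C := (R[i]).

Definition pauli4 (n : nat) : 'M[C]_2 :=
  match n with 0 => 1%:M | 1 => pauli R (@Ordinal 3 0 isT) | 2 => pauli R (@Ordinal 3 1 isT) | _ => pauli R (@Ordinal 3 2 isT) end.

Definition conf (a b : nat) : bool :=
  match a, b with
  | 0, _ | _, 0 => false
  | 1, 1 | 2, 2 => false
  | S (S (S _)), S (S (S _)) => false
  | _, _ => true end.

Lemma pauli_sq (k : 'I_3) : pauli R k *m pauli R k = 1%:M.
Proof.
apply/matrixP=> i j; rewrite !mxE !big_ord_recl !big_ord0 !mxE.
case: k => [[|[|[|k]]] Hk] //; case: i => [[|[|i]] Hi] //; case: j => [[|[|j]] Hj] //=.
all: apply/eqP; rewrite eq_complex /=; apply/andP; split; apply/eqP; ring.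
Qed.


Ltac csolve := apply/eqP; rewrite eq_complex /=; apply/andP; split; apply/eqP; ring.

Lemma pauli_anti (k l : 'I_3) : k != l -> pauli R k *m pauli R l = - (pauli R l *m pauli R k).
Proof.
move=> kl; apply/matrixP=> i j; rewrite !mxE !big_ord_recl !big_ord0 !mxE.
case: k kl => [[|[|[|k]]] Hk] //; case: l => [[|[|[|l]]] Hl] //= /eqP kl;
 try (exfalso; apply: kl; exact: val_inj);
 case: i => [[|[|i]] Hi] //; case: j => [[|[|j]] Hj] //=.
all: csolve.
Qed.

Lemma pauli_adj (k : 'I_3) : adj_mx (pauli R k) = pauli R k.
Proof.
apply/matrixP=> i j; rewrite !mxE.
case: k => [[|[|[|k]]] Hk] //; case: i => [[|[|i]] Hi] //; case: j => [[|[|j]] Hj] //=.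
all: csolve.
Qed.

Lemma adj1 m : adj_mx (1%:M : 'M[C]_m) = 1%:M.
Proof.
apply/matrixP=> i j; rewrite !mxE conjc_nat eq_sym //.
Qed.

Lemma p4_sq a : pauli4 a *m pauli4 a = 1%:M.
Proof. case: a => [|[|[|a]]] /=; rewrite ?mulmx1 ?pauli_sq //. Qed.

Lemma p4_adj a : adj_mx (pauli4 a) = pauli4 a.
Proof. case: a => [|[|[|a]]] /=; rewrite ?adj1 ?pauli_adj //. Qed.

Lemma p4_comm a b : pauli4 a *m pauli4 b = (if conf a b then -1 else 1) *: (pauli4 b *m pauli4 a).
Proof.
case: a => [|[|[|a]]]; case: b => [|[|[|b]]] /=;
  rewrite ?scale1r ?mulmx1 ?mul1mx ?scaleN1r //; apply: pauli_anti => //.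
Qed.

Lemma tens_scalel m n p q (k : C) (A : 'M[C]_(m,n)) (B : 'M[C]_(p,q)) :
  (k *: A) *t B = k *: (A *t B).
Proof. by apply/matrixP=> i j; rewrite !mxE mulrA. Qed.

Lemma tens_scaler m n p q (k : C) (A : 'M[C]_(m,n)) (B : 'M[C]_(p,q)) :
  A *t (k *: B) = k *: (A *t B).
Proof. by apply/matrixP=> i j; rewrite !mxE mulrCA. Qed.

Lemma tens11 m n : (1%:M : 'M[C]_m) *t (1%:M : 'M[C]_n) = 1%:M.
Proof.
apply/matrixP=> i j.
case: (mxtens_indexP i)=> i0 i1; case: (mxtens_indexP j)=> j0 j1.
rewrite tensmxE !mxE (can_eq (@mxtens_indexK _ _)) xpair_eqE.
by case: (i0 == j0); case: (i1 == j1); rewrite /= ?mulr1 ?mulr0 ?mul0r.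
Qed.

Lemma adj_tens m n p q (A : 'M[C]_(m,n)) (B : 'M[C]_(p,q)) :
  adj_mx (A *t B) = adj_mx A *t adj_mx B.
Proof. by apply/matrixP=> i j; rewrite !mxE rmorphM. Qed.

Definition T3 (a b c : nat) : 'M[C]_(2 * 2 * 2) := (pauli4 a *t pauli4 b) *t pauli4 c.

Lemma T3_sq a b c : T3 a b c *m T3 a b c = 1%:M.
Proof. by rewrite /T3 !tensmx_mul !p4_sq !tens11. Qed.

Lemma T3_adj a b c : adj_mx (T3 a b c) = T3 a b c.
Proof. by rewrite /T3 !adj_tens !p4_adj. Qed.

Definition anti (t u : nat * nat * nat) : bool :=
  odd (conf t.1.1 u.1.1 + conf t.1.2 u.1.2 + conf t.2 u.2).

Lemma T3_anti t u : anti t u ->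
  T3 t.1.1 t.1.2 t.2 *m T3 u.1.1 u.1.2 u.2 = - (T3 u.1.1 u.1.2 u.2 *m T3 t.1.1 t.1.2 t.2).
Proof.
rewrite /anti /T3 !tensmx_mul (p4_comm t.1.1) (p4_comm t.1.2) (p4_comm t.2).
rewrite !(tens_scalel, tens_scaler) !scalerA.
case: (conf _ _); case: (conf _ _); case: (conf _ _) => //= _;
  rewrite ?mulrNN ?mulr1 ?mul1r ?mulN1r ?scaleN1r ?opprK //.
Qed.

Lemma adj_mxD m n (A B : 'M[C]_(m,n)) : adj_mx (A + B) = adj_mx A + adj_mx B.
Proof. by apply/matrixP=> i j; rewrite !mxE rmorphD. Qed.
Lemma adj_mxN m n (A : 'M[C]_(m,n)) : adj_mx (- A) = - adj_mx A.
Proof. by apply/matrixP=> i j; rewrite !mxE rmorphN. Qed.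
Lemma adj_mx0 m n : adj_mx (0 : 'M[C]_(m,n)) = 0.
Proof. by apply/matrixP=> i j; rewrite !mxE rmorph0. Qed.
Lemma adj_mxZ m n k (A : 'M[C]_(m,n)) : adj_mx (k *: A) = conjc k *: adj_mx A.
Proof. by apply/matrixP=> i j; rewrite !mxE rmorphM. Qed.

Lemma psd_tr n (rho : 'M[C]_n) (B : 'M[C]_n) :
  (forall v : 'cV[C]_n, 0 <= (adj_mx v *m rho *m v) 0 0) ->
  0 <= \tr (rho *m (B *m adj_mx B)).
Proof.
move=> H.
have -> : \tr (rho *m (B *m adj_mx B)) = \sum_l (adj_mx (col l B) *m rho *m col l B) 0 0.
  rewrite mulmxA mxtrace_mulC mulmxA /mxtrace; apply: eq_bigr => l _.
  have -> : adj_mx (col l B) = row l (adj_mx B) by apply/matrixP=> i j; rewrite !mxE.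
  rewrite -row_mul !mxE; apply: eq_bigr => k _; rewrite !mxE //.
by apply: sumr_ge0 => l _; apply: H.
Qed.

Lemma Re_mulC (x : R) (z : C) : complex.Re (x%:C * z) = x * complex.Re z.
Proof. by case: z => a b /=; ring. Qed.
Lemma ReD (y z : C) : complex.Re (y + z) = complex.Re y + complex.Re z.
Proof. by case: y; case: z. Qed.
Lemma ReN (z : C) : complex.Re (- z) = - complex.Re z.
Proof. by case: z. Qed.
Lemma Re_sum (T : Type) (s : seq T) (F : T -> C) : complex.Re (\sum_(t <- s) F t) = \sum_(t <- s) complex.Re (F t).
Proof. by elim: s => [|t s IH]; rewrite ?big_nil ?big_cons ?ReD ?IH. Qed.

Lemma anti_bound n (rho : 'M[C]_n) (T : Type) (M : T -> 'M[C]_n) (r : rel T)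
  (f : T -> R) (s : seq T) :
  is_density rho ->
  (forall t, f t = complex.Re (\tr (rho *m M t))) ->
  (forall t, M t *m M t = 1%:M) -> (forall t, adj_mx (M t) = M t) ->
  (forall t u, r t u -> M t *m M u = - (M u *m M t)) -> pairwise r s ->
  \sum_(t <- s) f t ^+ 2 <= 1.
Proof.
move=> [_ Hpsd Htr] Hf Hsq Had Hanti Hpw.
have HA2 : (\sum_(t <- s) (f t)%:C *: M t) *m (\sum_(t <- s) (f t)%:C *: M t)
   = (\sum_(t <- s) f t ^+ 2)%:C *: 1%:M.
  elim: s Hpw => [|t s IH] /=.
    by rewrite !big_nil mul0mx rmorph0 scale0r.
  move=> /andP[Hall Hpw']; rewrite !big_cons.
  set B := \sum_(u <- s) _.
  have cross : ((f t)%:C *: M t) *m B + B *m ((f t)%:C *: M t) = 0.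
    rewrite /B; elim: s Hall {IH Hpw' B} => [|u s IHs] /=.
      by rewrite !big_nil mulmx0 mul0mx addr0.
    move=> /andP[Htu Hall]; rewrite !big_cons mulmxDr mulmxDl.
    rewrite addrACA IHs // addr0.
    rewrite -!scalemxAl -!scalemxAr (Hanti _ _ Htu).
    by rewrite !scalerN !scalerA mulrC addNr.
  rewrite mulmxDl !mulmxDr IH // addrA -[X in X + _]addrA cross addr0.
  rewrite -scalemxAl -scalemxAr Hsq scalerA rmorphD scalerDl -rmorphM expr2 //.
pose A := \sum_(t <- s) (f t)%:C *: M t.
rewrite -/A in HA2.
have adjA : adj_mx A = A.
  rewrite /A (big_morph _ (@adj_mxD n n) (@adj_mx0 n n)).
  by apply: eq_bigr => t _; rewrite adj_mxZ Had conjc_real.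
have := psd_tr (1%:M - A) Hpsd.
rewrite adj_mxD adj_mxN adj1 adjA.
rewrite mulmxDl !mulmxDr !mul1mx !mulmx1 !mulNmx !mulmxN opprK HA2.
rewrite -scalemxAr mulmx1.
rewrite !mxtraceD !linearN /= mxtraceZ Htr mulr1.
rewrite /A mulmx_sumr.
rewrite (big_morph _ (@mxtraceD _ n) (@mxtrace0 _ n)).
rewrite lecE /= => /andP[_ H0].
move: H0; rewrite !ReD !ReN Re_sum /=.
under eq_bigr => t _ do rewrite -scalemxAr mxtraceZ Re_mulC -Hf.
set c := \sum_(t <- s) f t ^+ 2.
move=> H0; lra.

Qed.

Lemma sum_tens m n (F : 'I_(m * n) -> C) :
  \sum_(i < m * n) F i = \sum_(a < m) \sum_(b < n) F (mxtens_index (a, b)).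
Proof.
rewrite pair_big /=.
rewrite (reindex (@mxtens_index m n)) /=; last first.
  by exists (@mxtens_unindex m n) => x _; rewrite ?mxtens_indexK ?mxtens_unindexK.
by apply: eq_bigr => -[a b].
Qed.

Definition o1 : 'I_2 := lift ord0 ord0.
Lemma sum2 (F : 'I_2 -> C) : \sum_(i < 2) F i = F ord0 + F o1.
Proof. by rewrite !big_ord_recl big_ord0 addr0. Qed.
Lemma d00 : (1%:M : 'M[C]_2) ord0 ord0 = 1. Proof. by rewrite mxE. Qed.
Lemma d11 : (1%:M : 'M[C]_2) o1 o1 = 1. Proof. by rewrite mxE. Qed.
Lemma d01 : (1%:M : 'M[C]_2) ord0 o1 = 0. Proof. by rewrite mxE. Qed.
Lemma d10 : (1%:M : 'M[C]_2) o1 ord0 = 0. Proof. by rewrite mxE. Qed.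


Lemma rhoAE (rho : 'M[C]_(2*2*2)) (a a' : 'I_2) : rhoA rho a a' = \sum_(b < 2) \sum_(c < 2) rho (idx3 a b c) (idx3 a' b c).
Proof. by rewrite mxE. Qed.

Lemma trT (rho : 'M[C]_(2*2*2)) (P Q S : 'M[C]_2) :
  \tr (rho *m ((P *t Q) *t S)) =
  \sum_(a < 2) \sum_(b < 2) \sum_(c < 2) \sum_(a' < 2) \sum_(b' < 2) \sum_(c' < 2)
    rho (idx3 a b c) (idx3 a' b' c') * (P a' a * Q b' b * S c' c).
Proof.
rewrite /mxtrace sum_tens sum_tens.
apply: eq_bigr => a _; apply: eq_bigr => b _; apply: eq_bigr => c _.
rewrite mxE sum_tens sum_tens.
apply: eq_bigr => a' _; apply: eq_bigr => b' _; apply: eq_bigr => c' _.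
by rewrite !tensmxE.
Qed.

Lemma fst2E (a b : 'I_2) : fst2 (mxtens_index (a, b)) = a.
Proof. by rewrite /fst2 mxtens_indexK. Qed.
Lemma snd2E (a b : 'I_2) : snd2 (mxtens_index (a, b)) = b.
Proof. by rewrite /snd2 mxtens_indexK. Qed.

Ltac trsolve := rewrite trT /mxtrace ?sum_tens !sum2 !d00 !d01 !d10 !d11;
  do 3 rewrite ?mxE ?sum_tens ?sum2; rewrite ?fst2E ?snd2E; ring.

Lemma trA (rho : 'M[C]_(2*2*2)) (P : 'M[C]_2) :
  \tr (rhoA rho *m P) = \tr (rho *m ((P *t 1%:M) *t 1%:M)).
Proof. trsolve. Qed.
Lemma trB (rho : 'M[C]_(2*2*2)) (P : 'M[C]_2) :
  \tr (rhoB rho *m P) = \tr (rho *m ((1%:M *t P) *t 1%:M)).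
Proof. trsolve. Qed.
Lemma trC (rho : 'M[C]_(2*2*2)) (P : 'M[C]_2) :
  \tr (rhoC rho *m P) = \tr (rho *m ((1%:M *t 1%:M) *t P)).
Proof. trsolve. Qed.
Lemma trAB (rho : 'M[C]_(2*2*2)) (P Q : 'M[C]_2) :
  \tr (rhoAB rho *m kron2 P Q) = \tr (rho *m ((P *t Q) *t 1%:M)).
Proof. trsolve. Qed.
Lemma trAC (rho : 'M[C]_(2*2*2)) (P Q : 'M[C]_2) :
  \tr (rhoAC rho *m kron2 P Q) = \tr (rho *m ((P *t 1%:M) *t Q)).
Proof. trsolve. Qed.
Lemma trBC (rho : 'M[C]_(2*2*2)) (P Q : 'M[C]_2) :
  \tr (rhoBC rho *m kron2 P Q) = \tr (rho *m ((1%:M *t P) *t Q)).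
Proof. trsolve. Qed.

Fact X_key : unit. Proof. exact: tt. Qed.
Definition X := locked_with X_key (fun (rho : 'M[C]_(2*2*2)) (a b c : nat) => complex.Re (\tr (rho *m T3 a b c))).
Lemma XE rho a b c : X rho a b c = complex.Re (\tr (rho *m T3 a b c)).
Proof. by rewrite /X unlock. Qed.

Lemma setb (rho : 'M[C]_(2*2*2)) (Hd : is_density rho) (s : seq (nat * nat * nat)) :
  pairwise anti s -> \sum_(t <- s) X rho t.1.1 t.1.2 t.2 ^+ 2 <= 1.
Proof.
move=> Hp.
apply: (anti_bound (M := fun t => T3 t.1.1 t.1.2 t.2) (r := anti)
  (f := fun t => X rho t.1.1 t.1.2 t.2) Hd) => //.
- by move=> t; rewrite XE.
- by move=> t; rewrite T3_sq.
- by move=> t; rewrite T3_adj.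
- by move=> t u; apply: T3_anti.
Qed.

Lemma p4S (k : 'I_3) : pauli4 k.+1 = pauli R k.
Proof. by case: k => [[|[|[|k]]] Hk] //=; congr pauli; apply: val_inj. Qed.
Lemma p40 : pauli4 0 = 1%:M. Proof. by []. Qed.

Lemma blochA rho k : bloch (rhoA rho) k = X rho k.+1 0 0.
Proof. by rewrite /bloch trA XE /T3 p4S p40. Qed.
Lemma blochB rho k : bloch (rhoB rho) k = X rho 0 k.+1 0.
Proof. by rewrite /bloch trB XE /T3 p4S p40. Qed.
Lemma blochC rho k : bloch (rhoC rho) k = X rho 0 0 k.+1.
Proof. by rewrite /bloch trC XE /T3 p4S p40. Qed.
Lemma tAB rho k l : tcorr (rhoAB rho) k l = X rho k.+1 l.+1 0.
Proof. by rewrite /tcorr trAB XE /T3 !p4S p40. Qed.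
Lemma tAC rho k l : tcorr (rhoAC rho) k l = X rho k.+1 0 l.+1.
Proof. by rewrite /tcorr trAC XE /T3 !p4S p40. Qed.
Lemma tBC rho k l : tcorr (rhoBC rho) k l = X rho 0 k.+1 l.+1.
Proof. by rewrite /tcorr trBC XE /T3 !p4S p40. Qed.
End P.


Section M.
Variable R : rcfType.
Implicit Type rho : 'M[R[i]]_(2*2*2).

Lemma nA rho :
  bloch_norm2 (rhoA rho) = X rho 1 0 0 ^+2 + X rho 2 0 0 ^+2 + X rho 3 0 0 ^+2.
Proof. rewrite /bloch_norm2 !big_ord_recl big_ord0 !blochA -[(bump 0 0).+1]/2%N -[(bump 0 (bump 0 0)).+1]/3%N; ring. Qed.
Lemma nB rho :
  bloch_norm2 (rhoB rho) = X rho 0 1 0 ^+2 + X rho 0 2 0 ^+2 + X rho 0 3 0 ^+2.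
Proof. rewrite /bloch_norm2 !big_ord_recl big_ord0 !blochB -[(bump 0 0).+1]/2%N -[(bump 0 (bump 0 0)).+1]/3%N; ring. Qed.
Lemma nC rho :
  bloch_norm2 (rhoC rho) = X rho 0 0 1 ^+2 + X rho 0 0 2 ^+2 + X rho 0 0 3 ^+2.
Proof. rewrite /bloch_norm2 !big_ord_recl big_ord0 !blochC -[(bump 0 0).+1]/2%N -[(bump 0 (bump 0 0)).+1]/3%N; ring. Qed.
Lemma sAB rho : Scorr (rhoAB rho) =
  X rho 1 1 0 ^+2 + X rho 1 2 0 ^+2 + X rho 1 3 0 ^+2 +
  X rho 2 1 0 ^+2 + X rho 2 2 0 ^+2 + X rho 2 3 0 ^+2 +
  X rho 3 1 0 ^+2 + X rho 3 2 0 ^+2 + X rho 3 3 0 ^+2.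
Proof. rewrite /Scorr !big_ord_recl !big_ord0 !tAB -[(bump 0 0).+1]/2%N -[(bump 0 (bump 0 0)).+1]/3%N; ring. Qed.
Lemma sAC rho : Scorr (rhoAC rho) =
  X rho 1 0 1 ^+2 + X rho 1 0 2 ^+2 + X rho 1 0 3 ^+2 +
  X rho 2 0 1 ^+2 + X rho 2 0 2 ^+2 + X rho 2 0 3 ^+2 +
  X rho 3 0 1 ^+2 + X rho 3 0 2 ^+2 + X rho 3 0 3 ^+2.
Proof. rewrite /Scorr !big_ord_recl !big_ord0 !tAC -[(bump 0 0).+1]/2%N -[(bump 0 (bump 0 0)).+1]/3%N; ring. Qed.
Lemma sBC rho : Scorr (rhoBC rho) =
  X rho 0 1 1 ^+2 + X rho 0 1 2 ^+2 + X rho 0 1 3 ^+2 +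
  X rho 0 2 1 ^+2 + X rho 0 2 2 ^+2 + X rho 0 2 3 ^+2 +
  X rho 0 3 1 ^+2 + X rho 0 3 2 ^+2 + X rho 0 3 3 ^+2.
Proof. rewrite /Scorr !big_ord_recl !big_ord0 !tBC -[(bump 0 0).+1]/2%N -[(bump 0 (bump 0 0)).+1]/3%N; ring. Qed.

Lemma key (a b c x y z : R) : a <= 1 -> b <= 1 -> c <= 1 ->
  a + b + c + x <= 4 -> a + b + c + y <= 4 -> a + b + c + z <= 4 ->
  a + b + c + x + y <= 5 -> a + b + c + x + z <= 5 -> a + b + c + y + z <= 5 ->
  a + b + c + Num.max (Num.max 0 (x - 1) + Num.max 0 (y - 1))
      (Num.max (Num.max 0 (x - 1) + Num.max 0 (z - 1))
               (Num.max 0 (y - 1) + Num.max 0 (z - 1))) <= 3.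
Proof.
(move=> *; rewrite !maxEle; repeat case: ifP => ?; lra).
Qed.

Lemma facts rho : is_density rho ->
  [/\ bloch_norm2 (rhoA rho) <= 1, bloch_norm2 (rhoB rho) <= 1, bloch_norm2 (rhoC rho) <= 1,
   let s := bloch_norm2 (rhoA rho) + bloch_norm2 (rhoB rho) + bloch_norm2 (rhoC rho) in
   [/\ s + Scorr (rhoAB rho) <= 4, s + Scorr (rhoAC rho) <= 4 & s + Scorr (rhoBC rho) <= 4] &
   let s := bloch_norm2 (rhoA rho) + bloch_norm2 (rhoB rho) + bloch_norm2 (rhoC rho) in
   [/\ s + Scorr (rhoAB rho) + Scorr (rhoAC rho) <= 5,
       s + Scorr (rhoAB rho) + Scorr (rhoBC rho) <= 5 &
       s + Scorr (rhoAC rho) + Scorr (rhoBC rho) <= 5]].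
Proof.
move=> Hd.
have h0 := setb Hd (s := [:: (1,0,0)%N; (2,0,0)%N; (3,0,0)%N]) isT.
rewrite !big_cons big_nil /= in h0.
have h1 := setb Hd (s := [:: (0,1,0)%N; (0,2,0)%N; (0,3,0)%N]) isT.
rewrite !big_cons big_nil /= in h1.
have h2 := setb Hd (s := [:: (0,0,1)%N; (0,0,2)%N; (0,0,3)%N]) isT.
rewrite !big_cons big_nil /= in h2.
have h3 := setb Hd (s := [:: (0,1,0)%N; (0,2,0)%N; (1,3,0)%N; (2,3,0)%N; (3,3,0)%N]) isT.
rewrite !big_cons big_nil /= in h3.
have h4 := setb Hd (s := [:: (0,1,0)%N; (0,3,0)%N; (1,2,0)%N; (2,2,0)%N; (3,2,0)%N]) isT.
rewrite !big_cons big_nil /= in h4.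
have h5 := setb Hd (s := [:: (0,2,0)%N; (0,3,0)%N; (1,1,0)%N; (2,1,0)%N; (3,1,0)%N]) isT.
rewrite !big_cons big_nil /= in h5.
have h6 := setb Hd (s := [:: (1,0,0)%N; (2,0,0)%N; (3,1,0)%N; (3,2,0)%N; (3,3,0)%N]) isT.
rewrite !big_cons big_nil /= in h6.
have h7 := setb Hd (s := [:: (1,0,0)%N; (2,1,0)%N; (2,2,0)%N; (2,3,0)%N; (3,0,0)%N]) isT.
rewrite !big_cons big_nil /= in h7.
have h8 := setb Hd (s := [:: (1,1,0)%N; (1,2,0)%N; (1,3,0)%N; (2,0,0)%N; (3,0,0)%N]) isT.
rewrite !big_cons big_nil /= in h8.
have h9 := setb Hd (s := [:: (0,0,1)%N; (0,0,2)%N; (1,0,3)%N; (2,0,3)%N; (3,0,3)%N]) isT.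
rewrite !big_cons big_nil /= in h9.
have h10 := setb Hd (s := [:: (0,0,1)%N; (0,0,3)%N; (1,0,2)%N; (2,0,2)%N; (3,0,2)%N]) isT.
rewrite !big_cons big_nil /= in h10.
have h11 := setb Hd (s := [:: (0,0,2)%N; (0,0,3)%N; (1,0,1)%N; (2,0,1)%N; (3,0,1)%N]) isT.
rewrite !big_cons big_nil /= in h11.
have h12 := setb Hd (s := [:: (1,0,0)%N; (2,0,0)%N; (3,0,1)%N; (3,0,2)%N; (3,0,3)%N]) isT.
rewrite !big_cons big_nil /= in h12.
have h13 := setb Hd (s := [:: (1,0,0)%N; (2,0,1)%N; (2,0,2)%N; (2,0,3)%N; (3,0,0)%N]) isT.
rewrite !big_cons big_nil /= in h13.
have h14 := setb Hd (s := [:: (1,0,1)%N; (1,0,2)%N; (1,0,3)%N; (2,0,0)%N; (3,0,0)%N]) isT.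
rewrite !big_cons big_nil /= in h14.
have h15 := setb Hd (s := [:: (0,0,1)%N; (0,0,2)%N; (0,1,3)%N; (0,2,3)%N; (0,3,3)%N]) isT.
rewrite !big_cons big_nil /= in h15.
have h16 := setb Hd (s := [:: (0,0,1)%N; (0,0,3)%N; (0,1,2)%N; (0,2,2)%N; (0,3,2)%N]) isT.
rewrite !big_cons big_nil /= in h16.
have h17 := setb Hd (s := [:: (0,0,2)%N; (0,0,3)%N; (0,1,1)%N; (0,2,1)%N; (0,3,1)%N]) isT.
rewrite !big_cons big_nil /= in h17.
have h18 := setb Hd (s := [:: (0,1,0)%N; (0,2,0)%N; (0,3,1)%N; (0,3,2)%N; (0,3,3)%N]) isT.
rewrite !big_cons big_nil /= in h18.
have h19 := setb Hd (s := [:: (0,1,0)%N; (0,2,1)%N; (0,2,2)%N; (0,2,3)%N; (0,3,0)%N]) isT.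
rewrite !big_cons big_nil /= in h19.
have h20 := setb Hd (s := [:: (0,1,1)%N; (0,1,2)%N; (0,1,3)%N; (0,2,0)%N; (0,3,0)%N]) isT.
rewrite !big_cons big_nil /= in h20.
have h21 := setb Hd (s := [:: (0,0,1)%N; (0,0,2)%N; (0,0,3)%N]) isT.
rewrite !big_cons big_nil /= in h21.
have h22 := setb Hd (s := [:: (0,1,0)%N; (0,2,0)%N; (0,3,0)%N]) isT.
rewrite !big_cons big_nil /= in h22.
have h23 := setb Hd (s := [:: (1,0,0)%N; (2,0,1)%N; (2,0,2)%N; (2,0,3)%N; (3,1,0)%N; (3,2,0)%N; (3,3,0)%N]) isT.
rewrite !big_cons big_nil /= in h23.
have h24 := setb Hd (s := [:: (1,0,1)%N; (1,0,2)%N; (1,0,3)%N; (2,1,0)%N; (2,2,0)%N; (2,3,0)%N; (3,0,0)%N]) isT.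
rewrite !big_cons big_nil /= in h24.
have h25 := setb Hd (s := [:: (1,1,0)%N; (1,2,0)%N; (1,3,0)%N; (2,0,0)%N; (3,0,1)%N; (3,0,2)%N; (3,0,3)%N]) isT.
rewrite !big_cons big_nil /= in h25.
have h26 := setb Hd (s := [:: (0,0,1)%N; (0,0,2)%N; (0,0,3)%N]) isT.
rewrite !big_cons big_nil /= in h26.
have h27 := setb Hd (s := [:: (1,0,0)%N; (2,0,0)%N; (3,0,0)%N]) isT.
rewrite !big_cons big_nil /= in h27.
have h28 := setb Hd (s := [:: (0,1,0)%N; (0,2,1)%N; (0,2,2)%N; (0,2,3)%N; (1,3,0)%N; (2,3,0)%N; (3,3,0)%N]) isT.
rewrite !big_cons big_nil /= in h28.
have h29 := setb Hd (s := [:: (0,1,1)%N; (0,1,2)%N; (0,1,3)%N; (1,2,0)%N; (2,2,0)%N; (3,2,0)%N; (0,3,0)%N]) isT.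
rewrite !big_cons big_nil /= in h29.
have h30 := setb Hd (s := [:: (1,1,0)%N; (2,1,0)%N; (3,1,0)%N; (0,2,0)%N; (0,3,1)%N; (0,3,2)%N; (0,3,3)%N]) isT.
rewrite !big_cons big_nil /= in h30.
have h31 := setb Hd (s := [:: (1,0,0)%N; (2,0,0)%N; (3,0,0)%N]) isT.
rewrite !big_cons big_nil /= in h31.
have h32 := setb Hd (s := [:: (0,1,0)%N; (0,2,0)%N; (0,3,0)%N]) isT.
rewrite !big_cons big_nil /= in h32.
have h33 := setb Hd (s := [:: (0,0,1)%N; (1,0,2)%N; (2,0,2)%N; (3,0,2)%N; (0,1,3)%N; (0,2,3)%N; (0,3,3)%N]) isT.
rewrite !big_cons big_nil /= in h33.
have h34 := setb Hd (s := [:: (1,0,1)%N; (2,0,1)%N; (3,0,1)%N; (0,1,2)%N; (0,2,2)%N; (0,3,2)%N; (0,0,3)%N]) isT.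
rewrite !big_cons big_nil /= in h34.
have h35 := setb Hd (s := [:: (0,1,1)%N; (0,2,1)%N; (0,3,1)%N; (0,0,2)%N; (1,0,3)%N; (2,0,3)%N; (3,0,3)%N]) isT.
rewrite !big_cons big_nil /= in h35.

rewrite /= nA nB nC sAB sAC sBC.
(split; [lra|lra|lra|split; lra|split; lra]).
Qed.
End M.

Unset Implicit Arguments.
Close Scope complex_scope.

Theorem theorem7 (R : rcfType) (rho : 'M[R[i]]_(2 * 2 * 2)) :
  is_density rho -> I_local rho + I_nonlocal rho <= 3.
Proof.
move=> /facts [ha hb hc [f1 f2 f3] [g1 g2 g3]].
rewrite /I_local /I_nonlocal /Nij.
by apply: key.
Qed.
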